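(* Let $M$ be a matroid and let $A=\{A_i\to M\}_{i\in I}$ be a Tutte covering of $M$. Then there exists a Tutte covering $A'=\{A'_k\to M\}_{k\in K}$ of $M$ which is a refinement of $A$ and which is indecomposable, i.e. every domain $A'_k$ is an indecomposable matroid.
   Context: A (finite) matroid $M=(X,\mathcal{I})$ is a finite set $X$ with a family $\mathcal{I}$ of subsets (independent sets) satisfying the usual independence axioms. A morphism of matroids $(X_1,\mathcal{I}_1)\to(X_2,\mathcal{I}_2)$ is an injective map $\varphi\colon X_1\to X_2$ with $\varphi(I)\in\mathcal{I}_2$ for all $I\in\mathcal{I}_1$; this gives the category $\mathbf{Mat}$, and $\mathbf{Mat}_+$ denotes $\mathbf{Mat}$ with a disjoint basepoint object $\ast$ (only morphism into $\ast$ is $1_\ast$). An element $e\in X$ is a loop if $\{e\}\notin\mathcal{I}$, a coloop if it lies in every basis, and non-degenerate if it is neither. For $e\in X$, $M\setminus e$ is the deletion (ground set $X\setminus\{e\}$, independent sets those of $M$ avoiding $e$) and $M/e$ the contraction (ground set $X\setminus\{e\}$; if $e$ is not a loop, independent sets are those $I$ with $I\cup\{e\}\in\mathcal{I}$); the inclusion $X\setminus\{e\}\subseteq X$ induces morphisms $M\setminus e\to M$ and $M/e\to M$. A matroid is indecomposable if all its elements are degenerate (loops or coloops). For a rooted binary tree $T$ with root $r_T$, let $\mathcal{C}_T$ be the poset category on its vertices with $w\le v$ iff $w=v$ or $w$ is a descendant of $v$. An elementary deletion–contraction tree of shape $T$ is a functor $\mathcal{F}\colon\mathcal{C}_T\to\mathbf{Mat}_+$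 with $\mathcal{F}(r_T)\neq\ast$, such that for an internal vertex $v$ with a single child $w$, $\mathcal{F}(w)=\mathcal{F}(v)$ and $\mathcal{F}(w\to v)$ is the identity, and for an internal vertex $v$ with two children $w_1,w_2$ there is a non-degenerate element $e$ of $M=\mathcal{F}(v)$ such that $\{\mathcal{F}(w_1)\to M,\mathcal{F}(w_2)\to M\}$ is $\{M/e\to M, M\setminus e\to M\}$ (in either order) with the standard inclusions. A deletion–contraction tree is a functor naturally isomorphic to an elementary one. A Tutte covering of a matroid $M\neq\ast$ is a family $\{f_j\colon M_j\to M\}_{j=1,\dots,p}$ such that there is a rooted binary tree $T$ with leaves $v_1,\dots,v_p$ and a deletion–contraction tree $\mathcal{F}$ with $\mathcal{F}(r_T)=M$ and $f_j=\mathcal{F}(v_j\to r_T)$ for all $j$. A family $\{f_i\colon A_i\to A\}_{i\in I}$ refines $\{g_j\colon B_j\to A\}_{j\in J}$ if for each $i$ there are $j\in J$ and a morphism $h\colon A_i\to B_j$ with $f_i=g_j\circ h$. *)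

(* Defs.v *)
From mathcomp Require Import all_boot.
Set Implicit Arguments. Unset Strict Implicit. Unset Printing Implicit Defensive.

Record pmatroid := PMatroid { ground : finType; indep : pred {set ground} }.
Arguments indep : clear implicits.

Definition is_matroid (M : pmatroid) : Prop :=
  [/\ indep M set0,
      (forall I J : {set ground M}, J \subset I -> indep M I -> indep M J)
    & (forall I J : {set ground M}, indep M I -> indep M J -> #|I| < #|J| ->
         exists2 x, x \in J :\: I & indep M (x |: I))].

Definition is_morphism (M N : pmatroid) (f : ground M -> ground N) : Prop :=
  injective f /\ forall I : {set ground M}, indep M I -> indep N (f @: I).

(* isomorphisms in Mat: bijections such that f and its inverse are morphisms *)
Definition is_iso (M N : pmatroid) (f : ground M -> ground N) : Prop :=
  bijective f /\ forall I : {set ground M}, indep N (f @: I) = indep M I.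

Definition is_basis (M : pmatroid) (B : {set ground M}) : bool :=
  indep M B && [forall x, (x \notin B) ==> ~~ indep M (x |: B)].

Definition is_loop (M : pmatroid) (e : ground M) : bool := ~~ indep M [set e].
Definition is_coloop (M : pmatroid) (e : ground M) : bool :=
  [forall B : {set ground M}, is_basis B ==> (e \in B)].
Definition degenerate (M : pmatroid) (e : ground M) : bool :=
  is_loop e || is_coloop e.
Definition nondegenerate (M : pmatroid) (e : ground M) : bool := ~~ degenerate e.
Definition indecomposable (M : pmatroid) : Prop := forall e : ground M, degenerate e.

Definition dcground (M : pmatroid) (e : ground M) : finType :=
  {x : ground M | x != e}.

Definition delete (M : pmatroid) (e : ground M) : pmatroid :=
  @PMatroid (dcground e) (fun I => indep M (val @: I)).

Definition contract (M : pmatroid) (e : ground M) : pmatroid :=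
  @PMatroid (dcground e)
    (fun I => if is_loop e then indep M (val @: I)
              else indep M (val @: I :|: [set e])).

Definition mto (M : pmatroid) := {N : pmatroid & ground N -> ground M}.

(* Shapes of elementary deletion-contraction trees rooted at a matroid M:
   a leaf; a vertex with a single child (carrying the same matroid, identity
   map); or a vertex with two children M/e and M\e (in either order, given by
   [swap]) for a non-degenerate element e. *)
Inductive dctree : pmatroid -> Type :=
| DCLeaf (M : pmatroid) : dctree M
| DCUnary (M : pmatroid) : dctree M -> dctree M
| DCBinary (M : pmatroid) (e : ground M) (swap : bool) :
    nondegenerate e -> dctree (@contract M e) -> dctree (@delete M e) -> dctree M.

Definition push_mto (M : pmatroid) (e : ground M) (N : pmatroid)
  (g : ground N -> dcground e) (p : mto N) : mto M :=
  existT _ (projT1 p) (fun x => val (g (projT2 p x))).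

Fixpoint leaves (M : pmatroid) (t : dctree M) : seq (mto M) :=
  match t with
  | DCLeaf M => [:: existT _ M id]
  | DCUnary M t' => leaves t'
  | @DCBinary M e swap _ tc td =>
      let lc := map (@push_mto M e (@contract M e) id) (leaves tc) in
      let ld := map (@push_mto M e (@delete M e) id) (leaves td) in
      if swap then ld ++ lc else lc ++ ld
  end.

(* Tutte covering: the family {A i -> M} is, up to a natural isomorphism with
   an elementary deletion-contraction tree (root matroid M0, root iso
   alpha : M ~ M0, leaf isos beta), the family of leaf morphisms, with the
   leaves enumerated in an arbitrary order (bijection phi). *)
Definition tutte_covering (M : pmatroid) (I : finType) (A : I -> mto M) : Prop :=
  exists (M0 : pmatroid) (t : dctree M0) (alpha : ground M -> ground M0)
         (phi : I -> 'I_(size (leaves t))),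
    [/\ is_iso alpha, bijective phi &
     forall i : I,
       let L := nth (existT _ M0 id) (leaves t) (phi i) in
       exists beta : ground (projT1 (A i)) -> ground (projT1 L),
         is_iso beta /\ (alpha \o projT2 (A i)) =1 (projT2 L \o beta)].

Definition refines (M : pmatroid) (I J : finType) (A : I -> mto M) (B : J -> mto M) : Prop :=
  forall i : I, exists (j : J) (h : ground (projT1 (A i)) -> ground (projT1 (B j))),
    is_morphism h /\ projT2 (A i) =1 projT2 (B j) \o h.

(* Main.v *)
Require Import Defs.
From mathcomp Require Import all_boot.
From Stdlib Require List.

Set Implicit Arguments. Unset Strict Implicit. Unset Printing Implicit Defensive.

Definition hered (N : pmatroid) : Prop :=
  forall I J : {set ground N}, J \subset I -> indep N I -> indep N J.

Lemma In_cat T (x : T) (s1 s2 : seq T) :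
  List.In x (s1 ++ s2) -> List.In x s1 \/ List.In x s2.
Proof.
elim: s1 => [|a s IH] /=; first by right.
case=> [->|H]; first by left; left.
by case: (IH H) => H'; [left; right|right].
Qed.

Lemma In_catl T (x : T) (s1 s2 : seq T) : List.In x s1 -> List.In x (s1 ++ s2).
Proof. elim: s1 => [|a s IH] //= [->|H]; [by left|by right; apply: IH]. Qed.

Lemma In_catr T (x : T) (s1 s2 : seq T) : List.In x s2 -> List.In x (s1 ++ s2).
Proof. elim: s1 => [|a s IH] //= H; by right; apply: IH. Qed.

Lemma In_map T U (f : T -> U) (y : U) (s : seq T) :
  List.In y (map f s) -> exists x, List.In x s /\ y = f x.
Proof.
elim: s => [|a s IH] //= [<-|H]; first by exists a; split=> //; left.
by case: (IH H) => x [Hx ->]; exists x; split=> //; right.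
Qed.

Lemma In_map_in T U (f : T -> U) (x : T) (s : seq T) :
  List.In x s -> List.In (f x) (map f s).
Proof. elim: s => [|a s IH] //= [->|H]; [by left|by right; apply: IH]. Qed.

Lemma In_nth T (d x : T) (s : seq T) :
  List.In x s -> exists j, j < size s /\ nth d s j = x.
Proof.
elim: s => [|a s IH] //= [->|H]; first by exists 0.
by case: (IH H) => j [Hj Ej]; exists j.+1.
Qed.

Lemma nth_In T (d : T) (s : seq T) j : j < size s -> List.In (nth d s j) s.
Proof.
elim: s j => [|a s IH] [|j] //= Hj; first by left.
by right; apply: IH.
Qed.

Fixpoint fulln (n : nat) (N : pmatroid) : dctree N :=
  if n is n'.+1 then
    match [pick x : {e : ground N | nondegenerate e}] with
    | Some x => @DCBinary N (val x) false (valP x)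
                  (fulln n' (@contract N (val x))) (fulln n' (@delete N (val x)))
    | None => DCLeaf N
    end
  else DCLeaf N.

Fixpoint ext (N : pmatroid) (t : dctree N) : dctree N :=
  match t in dctree N return dctree N with
  | DCLeaf N => fulln #|ground N| N
  | DCUnary N t' => DCUnary (ext t')
  | @DCBinary N e s H tc td => @DCBinary N e s H (ext tc) (ext td)
  end.

Lemma morph_comp (A B C : pmatroid) (f : ground B -> ground C) (g : ground A -> ground B) :
  is_morphism f -> is_morphism g -> is_morphism (f \o g).
Proof.
move=> [fi fm] [gi gm]; split; first exact: inj_comp.
by move=> I HI; rewrite imset_comp; apply: fm; apply: gm.
Qed.

Lemma morph_id (A : pmatroid) : is_morphism (@id (ground A)).
Proof. by split=> // I; rewrite imset_id. Qed.

Lemma hered_contract N e : hered N -> hered (@contract N e).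
Proof.
move=> HN I J HJI /=; case: ifP => _.
  by apply: HN; apply: imsetS.
by apply: HN; apply: setSU; apply: imsetS.
Qed.

Lemma hered_delete N e : hered N -> hered (@delete N e).
Proof. by move=> HN I J HJI /=; apply: HN; apply: imsetS. Qed.

Lemma morph_contract N e : hered N -> is_morphism (val : ground (@contract N e) -> ground N).
Proof.
move=> HN; split; first exact: val_inj.
move=> I /=; case: ifP => _ // H; apply: HN H; exact: subsetUl.
Qed.

Lemma morph_delete N e : is_morphism (val : ground (@delete N e) -> ground N).
Proof. by split; first exact: val_inj. Qed.

Lemma card_dc N (e : ground N) : #|dcground e| < #|ground N|.
Proof.
rewrite /dcground card_sig.
have -> : #|[pred x | x != e]| = #|predC1 e| by apply: eq_card.
by rewrite cardC1 (cardD1 e) inE.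
Qed.

Lemma fulln_leaves n : forall N, hered N -> #|ground N| <= n ->
  forall x, List.In x (leaves (fulln n N)) ->
  indecomposable (projT1 x) /\ is_morphism (projT2 x).
Proof.
elim: n => [|n IH] N HN Hc x.
  move=> /= [<-|//]; split; last exact: morph_id.
  move=> e /=; move: Hc; rewrite leqn0 => /eqP/card0_eq/(_ e).
  by rewrite inE.
rewrite /=; case: pickP => [y _|Hn].
  simpl leaves => Hx; case: (In_cat Hx) => {}Hx.
    case: (In_map Hx) => z [Hz Ex]; subst x; rewrite /push_mto /=.
    have Hc' : #|ground (@contract N (val y))| <= n.
      by rewrite -ltnS; apply: leq_trans Hc; apply: card_dc.
    case: (IH _ (@hered_contract N (val y) HN) Hc' z Hz) => Hi Hm; split=> //.
    exact: (morph_comp (@morph_contract N (val y) HN) Hm).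
  case: (In_map Hx) => z [Hz Ex]; subst x; rewrite /push_mto /=.
  have Hc' : #|ground (@delete N (val y))| <= n.
    by rewrite -ltnS; apply: leq_trans Hc; apply: card_dc.
  case: (IH _ (@hered_delete N (val y) HN) Hc' z Hz) => Hi Hm; split=> //.
  exact: (morph_comp (@morph_delete N (val y)) Hm).
move=> /= [<-|//]; split; last exact: morph_id.
move=> e /=; apply/negPn/negP => He.
by have := Hn (exist _ e He).
Qed.

Lemma ext_leaves N (t : dctree N) : hered N -> forall x, List.In x (leaves (ext t)) ->
  indecomposable (projT1 x) /\ exists y, List.In y (leaves t) /\
    exists g : ground (projT1 x) -> ground (projT1 y),
      is_morphism g /\ projT2 x =1 projT2 y \o g.
Proof.
elim: t => {N} [N|N t IH|N e s Hnd tc IHc td IHd] HN x.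
- move=> Hx; have [Hi Hm] := fulln_leaves HN (leqnn _) Hx; split=> //.
  exists (existT _ N id); split; first by left.
  by exists (projT2 x).
- by move=> /= Hx; apply: IH.
- have Hc : forall z, List.In z (leaves (ext tc)) -> x = @push_mto N e (@contract N e) id z ->
     indecomposable (projT1 x) /\ exists y, List.In y (leaves (DCBinary s Hnd tc td)) /\
    exists g : ground (projT1 x) -> ground (projT1 y),
      is_morphism g /\ projT2 x =1 projT2 y \o g.
    move=> z Hz ->; have [Hi [y [Hy [g [Hg Eg]]]]] := IHc (hered_contract HN) z Hz.
    split=> //; exists (@push_mto N e (@contract N e) id y); split.
      simpl leaves; case: s {Hnd}.
        by apply: In_catr; apply: In_map_in.
      by apply: In_catl; apply: In_map_in.
    by exists g; split=> // w /=; rewrite Eg.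
  have Hd : forall z, List.In z (leaves (ext td)) -> x = @push_mto N e (@delete N e) id z ->
     indecomposable (projT1 x) /\ exists y, List.In y (leaves (DCBinary s Hnd tc td)) /\
    exists g : ground (projT1 x) -> ground (projT1 y),
      is_morphism g /\ projT2 x =1 projT2 y \o g.
    move=> z Hz ->; have [Hi [y [Hy [g [Hg Eg]]]]] := IHd (hered_delete HN) z Hz.
    split=> //; exists (@push_mto N e (@delete N e) id y); split.
      clear Hc; simpl leaves; case: s {Hnd}.
        by apply: In_catl; apply: In_map_in.
      by apply: In_catr; apply: In_map_in.
    by exists g; split=> // w /=; rewrite Eg.
  simpl leaves => Hx; case: s Hnd Hc Hd Hx => Hnd Hc Hd Hx.
    case: (In_cat Hx) => {}Hx.
      by case: (In_map Hx) => z [Hz Ex]; apply: (Hd z).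
    by case: (In_map Hx) => z [Hz Ex]; apply: (Hc z).
  case: (In_cat Hx) => {}Hx.
    by case: (In_map Hx) => z [Hz Ex]; apply: (Hc z).
  by case: (In_map Hx) => z [Hz Ex]; apply: (Hd z).
Qed.

Lemma imset_cancel (T U : finType) (f : T -> U) (g : U -> T) (J : {set U}) :
  cancel g f -> f @: (g @: J) = J.
Proof.
by move=> K; rewrite -imset_comp (eq_imset _ (fun x => K x)) imset_id.
Qed.

Theorem proposition3p6 (M : pmatroid) (HM : is_matroid M)
  (I : finType) (A : I -> mto M) (HA : tutte_covering A) :
  exists (K : finType) (A' : K -> mto M),
    [/\ tutte_covering A', refines A' A &
        forall k : K, indecomposable (projT1 (A' k))].
Proof.
case: HA => M0 [t [alpha [phi [[[ainv a1 a2] Ha] [phinv p1 p2] HL]]]].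
have HM0 : hered M0.
  move=> X Y HYX HX.
  have EX : X = alpha @: (ainv @: X) by rewrite imset_cancel.
  have EY : Y = alpha @: (ainv @: Y) by rewrite imset_cancel.
  rewrite EY Ha; case: HM => _ Hh _; apply: (Hh (ainv @: X)).
    exact: imsetS.
  by rewrite -Ha -EX.
set t' := ext t.
set d := existT (fun N : pmatroid => ground N -> ground M0) M0 id.
exists 'I_(size (leaves t')).
exists (fun k : 'I_(size (leaves t')) => existT (fun N : pmatroid => ground N -> ground M)
   (projT1 (nth d (leaves t') k)) (ainv \o projT2 (nth d (leaves t') k))).
split.
- exists M0, t', alpha, id; split=> //.
    by split=> //; exists ainv.
    by exists id.
  move=> k /=; exists id; split.
    by split; [exists id | move=> X; rewrite imset_id].
  by move=> w /=; rewrite a2.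
- move=> k /=.
  have Hk : List.In (nth d (leaves t') k) (leaves t') by apply: nth_In.
  have [_ [y [Hy [g [Hg Eg]]]]] := ext_leaves HM0 Hk.
  have [j [Hj Ej]] := In_nth d Hy.
  exists (phinv (Ordinal Hj)).
  have := HL (phinv (Ordinal Hj)); rewrite /= p2 /= Ej.
  case=> beta [[[binv b1 b2] Hb] Eb].
  exists (binv \o g); split.
    apply: morph_comp Hg; split; first exact: can_inj b2.
    by move=> X HX; rewrite -Hb imset_cancel.
  move=> w /=; rewrite Eg /=.
  have := Eb (binv (g w)); rewrite /= b2 => <-.
  by rewrite a1.
- move=> k; have Hk : List.In (nth d (leaves t') k) (leaves t') by apply: nth_In.
  by have [] := ext_leaves HM0 Hk.
Qed.
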